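(* Let $\mathcal{M}=\langle S,R_1,R_2,V\rangle$ and $\mathcal{M}'=\langle S',R_1',R_2',V'\rangle$ be bimodal models and let $f:S\to S'$ be a $\boxdot$-morphism from $\mathcal{M}$ to $\mathcal{M}'$. Then for all $x\in S$ and all $\phi\in\mathcal{L}(\boxdot)\cup\mathcal{L}(\boxplus)$, $\mathcal{M},x\vDash\phi\iff\mathcal{M}',f(x)\vDash\phi$.
   Context: Fix a nonempty set $\mathbf{P}$ of propositional variables. A bimodal model is $\langle S,R_1,R_2,V\rangle$ with $S$ nonempty, $R_1,R_2\subseteq S\times S$, $V:\mathbf{P}\to\mathcal{P}(S)$. Write $R_i(s)=\{t\mid sR_it\}$. $\mathcal{L}(\boxdot):\ \phi::=p\mid\neg\phi\mid(\phi\wedge\phi)\mid\boxdot\phi$ and $\mathcal{L}(\boxplus):\ \phi::=p\mid\neg\phi\mid(\phi\wedge\phi)\mid\boxplus\phi$. Truth: $\mathcal{M},s\vDash p$ iff $s\in V(p)$; Booleans as usual; $\mathcal{M},s\vDash\boxdot\phi$ iff for all $t,u$ with $sR_1t$ and $sR_2u$, ($\mathcal{M},t\vDash\phi\iff\mathcal{M},u\vDash\phi$); $\mathcal{M},s\vDash\boxplus\phi$ iff ($\mathcal{M},t\vDash\phi$ for all $t\in R_1(s)$) or ($\mathcal{M},u\vDash\neg\phi$ for all $u\in R_2(s)$). A function $f:S\to S'$ is a $\boxdot$-morphism from $\mathcal{M}$ to $\mathcal{M}'$ if for all $x\in S$: (Var) for all $p\in\mathbf{P}$, $x\in V(p)$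 iff $f(x)\in V'(p)$; (Forth) for all $y,z\in S$, if $xR_1y$, $xR_2z$ and $f(y)\neq f(z)$, then $f(x)R_1'f(y)$ and $f(x)R_2'f(z)$; (Back) for all $y',z'\in S'$, if $f(x)R_1'y'$, $f(x)R_2'z'$ and $y'\neq z'$, then there are $y,z\in S$ with $xR_1y$, $xR_2z$, $f(y)=y'$, $f(z)=z'$. *)

(* Defs.v *)
Record model (P : Type) := Model {
  state : Type;
  R1 : state -> state -> Prop;
  R2 : state -> state -> Prop;
  val : P -> state -> Prop
}.
Arguments Model {P} state R1 R2 val.
Arguments state {P} m.
Arguments R1 {P} m _ _.
Arguments R2 {P} m _ _.
Arguments val {P} m _ _.

Inductive formD (P : Type) : Type :=
| DVar : P -> formD P
| DNeg : formD P -> formD P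
| DAnd : formD P -> formD P -> formD P
| DBox : formD P -> formD P.
Arguments DVar {P} _.
Arguments DNeg {P} _.
Arguments DAnd {P} _ _.
Arguments DBox {P} _.

Inductive formP (P : Type) : Type :=
| PVar : P -> formP P
| PNeg : formP P -> formP P
| PAnd : formP P -> formP P -> formP P
| PBox : formP P -> formP P.
Arguments PVar {P} _.
Arguments PNeg {P} _.
Arguments PAnd {P} _ _.
Arguments PBox {P} _.

Fixpoint satD {P} (M : model P) (s : state M) (phi : formD P) : Prop :=
  match phi with
  | DVar p => val M p s
  | DNeg a => ~ satD M s a
  | DAnd a b => satD M s a /\ satD M s b
  | DBox a => forall t u, R1 M s t -> R2 M s u -> (satD M t a <-> satD M u a)
  end.

Fixpoint satP {P} (M : model P) (s : state M) (phi : formP P) : Prop :=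
  match phi with
  | PVar p => val M p s
  | PNeg a => ~ satP M s a
  | PAnd a b => satP M s a /\ satP M s b
  | PBox a => (forall t, R1 M s t -> satP M t a)
              \/ (forall u, R2 M s u -> ~ satP M u a)
  end.

Definition dot_morphism {P} (M M' : model P) (f : state M -> state M') : Prop :=
  forall x : state M,
    (forall p, val M p x <-> val M' p (f x)) /\
    (forall y z, R1 M x y -> R2 M x z -> f y <> f z ->
        R1 M' (f x) (f y) /\ R2 M' (f x) (f z)) /\
    (forall y' z', R1 M' (f x) y' -> R2 M' (f x) z' -> y' <> z' ->
        exists y z, R1 M x y /\ R2 M x z /\ f y = y' /\ f z = z').

(* Main.v *)
Require Import Defs.
From Stdlib Require Import Classical.

Lemma boxP_iff {P} (M : model P) (s : state M) (a : formP P) :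
  satP M s (PBox a) <->
  ~ (exists t u, R1 M s t /\ R2 M s u /\ ~ satP M t a /\ satP M u a).
Proof.
  simpl; split.
  - intros [H|H] [t [u [H1 [H2 [H3 H4]]]]].
    + exact (H3 (H t H1)).
    + exact (H u H2 H4).
  - intros H. destruct (classic (forall t, R1 M s t -> satP M t a)) as [C|C].
    + left; exact C.
    + right. intros u Hu Hs. apply C. intros t Ht.
      apply NNPP. intros Hn. apply H. exists t, u. tauto.
Qed.

Theorem proposition4p2 (P : Type) (p0 : P) (M M' : model P)
  (S_inh : inhabited (state M)) (f : state M -> state M')
  (Hf : dot_morphism M M' f) :
  (forall (x : state M) (phi : formD P), satD M x phi <-> satD M' (f x) phi) /\
  (forall (x : state M) (phi : formP P), satP M x phi <-> satP M' (f x) phi).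
Proof.
  split.
  - intros x phi. revert x. induction phi as [p|a IH|a IHa b IHb|a IH]; intros x; simpl.
    + apply (proj1 (Hf x)).
    + rewrite IH; tauto.
    + rewrite IHa, IHb; tauto.
    + destruct (Hf x) as [_ [Fo Ba]]. split.
      * intros H y' z' H1 H2.
        destruct (classic (y' = z')) as [E|E]. { subst; tauto. }
        destruct (Ba y' z' H1 H2 E) as [y [z [Hy [Hz [<- <-]]]]].
        rewrite <- IH, <- IH. auto.
      * intros H y z H1 H2.
        destruct (classic (f y = f z)) as [E|E].
        { rewrite IH, IH, E; tauto. }
        destruct (Fo y z H1 H2 E) as [G1 G2].
        rewrite IH, IH. auto.
  - intros x phi. revert x. induction phi as [p|a IH|a IHa b IHb|a IH]; intros x.
    + apply (proj1 (Hf x)).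
    + simpl; rewrite IH; tauto.
    + simpl; rewrite IHa, IHb; tauto.
    + rewrite !boxP_iff. destruct (Hf x) as [_ [Fo Ba]]. split.
      * intros H [y' [z' [H1 [H2 [H3 H4]]]]]. apply H.
        assert (E : y' <> z') by (intros ->; tauto).
        destruct (Ba y' z' H1 H2 E) as [y [z [Hy [Hz [<- <-]]]]].
        exists y, z. rewrite IH, IH. tauto.
      * intros H [y [z [H1 [H2 [H3 H4]]]]]. apply H.
        rewrite IH in H3, H4.
        assert (E : f y <> f z) by (intros E; rewrite E in H3; tauto).
        destruct (Fo y z H1 H2 E) as [G1 G2].
        exists (f y), (f z). tauto.
Qed.
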